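(* Let $K\ge2$, $0<q<p$ with $p+(K-1)q=1$, $\phi\in\Delta$ with $\phi_1\le\cdots\le\phi_K$, and $n\in\{0,\dots,K-1\}$. Let $g(n)=(1-nq)\phi_{n+1}-q\sum_{i>n}\phi_i$. Then: (a) $\theta^{[n]}\in\Delta$ if and only if $g(n)\ge0$; (b) for $n>0$, if $\theta^{[n-1]}\in\Delta$ then $\theta^{[n]}\in\Delta$; (c) for $n>0$, if $\theta^{[n-1]}\in\Delta$ then $\lambda^{[n-1]}\ge\lambda^{[n]}$; (d) for $n>0$, if $\phi_{n+1}=\phi_n$ then $g(n)=g(n-1)$; (e) for $n>0$, if $g(n-1)=0$ then $\theta^{[n-1]}=\theta^{[n]}$.
   Context: $\Delta=\{\theta\in\mathbb{R}^K:\theta_i\ge0,\sum_i\theta_i=1\}$. For sorted $\phi$ and $n\in\{0,\dots,K-1\}$: $\lambda^{[n]}=\frac{(p-q)\sum_{i>n}\phi_i}{1-nq}$, and $\theta^{[n]}\in\mathbb{R}^K$ is given by $\theta^{[n]}_i=0$ for $i\le n$ and $\theta^{[n]}_i=\frac{\phi_i}{\lambda^{[n]}}-\frac{q}{p-q}$ for $i>n$ (its entries sum to 1 but may be negative). *)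

(* Defs.v *)
(* Indices 1..K of the paper are the ordinals 0..K-1 of 'I_K:
   paper index i  <->  ordinal with value i-1. *)
From HB Require Import structures.
From mathcomp Require Import all_boot all_order all_algebra.
Set Implicit Arguments. Unset Strict Implicit. Unset Printing Implicit Defensive.
Import Order.TTheory GRing.Theory Num.Theory.
Local Open Scope ring_scope.

Section Defs.
Variables (R : realFieldType) (K : nat).

Definition in_simplex (th : 'I_K -> R) : Prop :=
  (forall i, 0 <= th i) /\ \sum_(i < K) th i = 1.

(* phi_{k+1} in the paper's 1-based notation = entry with 0-based index k
   (default 0 out of range; only used for k < K) *)
Definition phi_at (phi : 'I_K -> R) (k : nat) : R :=
  if @insub nat (fun j => (j < K)%N) 'I_K k is Some i then phi i else 0.

(* sum_{i > n} phi_i (paper, 1-based) = sum over 0-based indices i >= n *)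
Definition tail_sum (phi : 'I_K -> R) (n : nat) : R :=
  \sum_(i < K | (n <= i)%N) phi i.

Definition lam (p q : R) (phi : 'I_K -> R) (n : nat) : R :=
  (p - q) * tail_sum phi n / (1 - n%:R * q).

(* theta^{[n]} : zero on paper indices i <= n (0-based i < n) *)
Definition theta (p q : R) (phi : 'I_K -> R) (n : nat) : 'I_K -> R :=
  fun i => if (i < n)%N then 0 else phi i / lam p q phi n - q / (p - q).

Definition gfun (q : R) (phi : 'I_K -> R) (n : nat) : R :=
  (1 - n%:R * q) * phi_at phi n - q * tail_sum phi n.

End Defs.

(* Main.v *)
Require Import Defs.
From HB Require Import structures.
From mathcomp Require Import all_boot all_order all_algebra.
From mathcomp Require Import ring lra zify.
From Stdlib Require Import FunctionalExtensionality.
Import Order.TTheory GRing.Theory Num.Theory.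
Local Open Scope ring_scope.

Section H.
Context {R : realFieldType} {K : nat} {phi : 'I_K -> R}.

Lemma phi_atE {k} (h : (k < K)%N) : phi_at phi k = phi (Ordinal h).
Proof.
rewrite /phi_at; case: insubP => [i _ /= ei|]; last by rewrite h.
by congr phi; apply: val_inj.
Qed.

Lemma tail_split {m} (h : (m < K)%N) :
  tail_sum phi m = phi_at phi m + tail_sum phi m.+1.
Proof.
rewrite /tail_sum (bigD1 (Ordinal h)) //= (phi_atE h); congr (_ + _).
apply: eq_bigl => i; rewrite -(inj_eq val_inj) /=.
case: i => i hi /=; case: ltngtP => //.
Qed.

Lemma sum_const_tail n (c : R) : (n <= K)%N ->
  \sum_(i < K | (n <= i)%N) c = c *+ (K - n).
Proof.
move=> hn; rewrite -sumr_const_nat big_geq_mkord.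
by apply: eq_bigl => i.
Qed.

Hypothesis simp : in_simplex phi.
Hypothesis sorted : forall i j : 'I_K, (i <= j)%N -> phi i <= phi j.

Lemma tail_pos {n} : (n < K)%N -> 0 < tail_sum phi n.
Proof.
move=> hn.
have hK : (K.-1 < K)%N by lia.
set l := Ordinal hK.
have hl : forall i : 'I_K, phi i <= phi l.
  by move=> i; apply: sorted => /=; case: i => /= i; lia.
have h1 : 1 <= K%:R * phi l.
  case: simp => _ hs; rewrite -{1}hs mulr_natl.
  have -> : phi l *+ K = \sum_(i < K) phi l by rewrite sumr_const card_ord.
  by apply: ler_sum => i _; apply: hl.
have hK0 : (0 : R) < K%:R by rewrite ltr0n; lia.
have pl : 0 < phi l by nra.
rewrite /tail_sum (bigD1 l) /=; last by lia.
have : 0 <= \sum_(i < K | (n <= i)%N && (i != l)) phi i.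
  by apply: sumr_ge0 => i _; case: simp.
lra.
Qed.
End H.

Lemma sge0 {R : realFieldType} {x y : R} : x <= y -> 0 <= y - x.
Proof. by rewrite subr_ge0. Qed.

Lemma apos_gen {R : realFieldType} {p q a b : R} :
  0 < q -> q < p -> p + a * q = 1 -> b <= a -> 0 < 1 - b * q.
Proof. move=> hq hpq hp h; have := mulr_ge0 (sge0 h) (ltW hq); nra. Qed.

Lemma eq_gen {R : realFieldType} {p q k b : R} :
  p + (k - 1) * q = 1 -> (1 - b * q) - q * (k - b) = p - q.
Proof. move=> h; nra. Qed.

Section M.
Context {R : realFieldType} {K : nat} {p q : R} {phi : 'I_K -> R}.
Hypotheses (hK : (2 <= K)%N) (hq : 0 < q) (hpq : q < p) (hp : p + (K.-1)%:R * q = 1).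
Hypothesis simp : in_simplex phi.
Hypothesis sorted : forall i j : 'I_K, (i <= j)%N -> phi i <= phi j.

Lemma a_pos {n} : (n < K)%N -> 0 < 1 - n%:R * q.
Proof.
move=> hn; apply: (apos_gen hq hpq hp); rewrite ler_nat; lia.
Qed.

Lemma theta_val {n} {i : 'I_K} : (n < K)%N -> (n <= i)%N ->
  theta p q phi n i = (phi i * (1 - n%:R * q) - q * tail_sum phi n)
                      / ((p - q) * tail_sum phi n).
Proof.
move=> hn hi; rewrite /theta ltnNge hi /= /lam.
have := a_pos hn; have := tail_pos simp sorted hn => hT ha.
have hpq0 : p - q != 0 by rewrite subr_eq0 gt_eqF.
field; rewrite ?hpq0 ?gt_eqF //=.
Qed.

Lemma theta_sum {n} : (n < K)%N -> \sum_(i < K) theta p q phi n i = 1.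
Proof.
move=> hn.
have -> : \sum_(i < K) theta p q phi n i =
          \sum_(i < K | (n <= i)%N) (phi i / lam p q phi n - q / (p - q)).
  rewrite [RHS]big_mkcond; apply: eq_bigr => i _; rewrite /theta ltnNge.
  by case: (n <= i)%N.
rewrite sumrB -mulr_suml sum_const_tail ?(ltnW hn) // -mulr_natr natrB ?(ltnW hn) //.
rewrite -/(tail_sum phi n) /lam.
have := a_pos hn; have := tail_pos simp sorted hn => hT ha.
have hpq0 : p - q != 0 by rewrite subr_eq0 gt_eqF.
have -> : tail_sum phi n / ((p - q) * tail_sum phi n / (1 - n%:R * q)) -
   q / (p - q) * (K%:R - n%:R) = ((1 - n%:R * q) - q * (K%:R - n%:R)) / (p - q).
  by field; rewrite ?hpq0 ?gt_eqF.
have hK1 : (K.-1)%:R = K%:R - 1 :> R by rewrite -subn1 natrB //; lia.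
have -> : (1 - n%:R * q) - q * (K%:R - n%:R) = p - q.
  by apply: eq_gen; rewrite -hK1.
by rewrite divff.
Qed.

Lemma part_a {n} : (n < K)%N ->
  (in_simplex (theta p q phi n) <-> 0 <= gfun q phi n).
Proof.
move=> hn.
have := a_pos hn; have := tail_pos simp sorted hn => hT ha.
have hpq' : 0 < p - q by rewrite subr_gt0.
split.
- case=> hnn _; have := hnn (Ordinal hn).
  rewrite theta_val //= pmulr_lge0; last by rewrite invr_gt0 mulr_gt0.
  rewrite /gfun (phi_atE hn); nra.
- move=> hg; split; last exact: theta_sum.
  move=> i; case: (ltnP i n) => hi; first by rewrite /theta hi.
  rewrite theta_val //; apply: divr_ge0; last by rewrite ltW // mulr_gt0.
  have := sorted (Ordinal hn) i hi.
  move: hg; rewrite /gfun (phi_atE hn) => hg hle.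
  have := mulr_ge0 (ltW ha) (sge0 hle). 
  nra.
Qed.
End M.

Theorem lemma3 (R : realFieldType) (K : nat) (p q : R) (phi : 'I_K -> R) (n : nat) :
  (2 <= K)%N -> 0 < q -> q < p -> p + (K.-1)%:R * q = 1 ->
  in_simplex phi -> (forall i j : 'I_K, (i <= j)%N -> phi i <= phi j) ->
  (n < K)%N ->
  [/\ (in_simplex (theta p q phi n) <-> 0 <= gfun q phi n),
      ((0 < n)%N -> in_simplex (theta p q phi n.-1) -> in_simplex (theta p q phi n)),
      ((0 < n)%N -> in_simplex (theta p q phi n.-1) -> lam p q phi n <= lam p q phi n.-1),
      ((0 < n)%N -> phi_at phi n = phi_at phi n.-1 -> gfun q phi n = gfun q phi n.-1)
    & ((0 < n)%N -> gfun q phi n.-1 = 0 -> theta p q phi n.-1 = theta p q phi n)].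
Proof.
move=> hK hq hpq hp simp sorted hn.
have PA := part_a hK hq hpq hp simp sorted.
split; first exact: PA.
all: case: n hn => [|m] hn //= _.
all: have hm : (m < K)%N by lia.
all: have := a_pos hK hq hpq hp hn; have := a_pos hK hq hpq hp hm.
all: have := tail_pos simp sorted hn => hT ha' ha.
all: have hpq' : 0 < p - q by rewrite subr_gt0.
all: have hle : phi_at phi m <= phi_at phi m.+1
       by rewrite (phi_atE hm) (phi_atE hn); apply: sorted => /=.
- move=> /(PA _ hm) hg; apply/(PA _ hn).
  move: hg ha hle; rewrite /gfun (tail_split hm) -natr1 => hg ha hle.
  have := mulr_ge0 (ltW ha) (sge0 hle).
  nra.
- move=> /(PA _ hm) hg.
  move: hg ha ha' hle; rewrite /gfun /lam (tail_split hm) -natr1 => hg ha ha' hle.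
  set T := tail_sum phi m.+1 in hT hg *; set f := phi_at phi m in hg hle *.
  rewrite -subr_ge0.
  have -> : (p - q) * (f + T) / (1 - m%:R * q) - (p - q) * T / (1 - (m%:R + 1) * q)
     = (p - q) * ((1 - m%:R * q) * f - q * (f + T)) / ((1 - m%:R * q) * (1 - (m%:R + 1) * q)).
    by field; rewrite ?gt_eqF.
  by apply: divr_ge0; [apply: mulr_ge0; [apply: ltW|] | rewrite ltW // mulr_gt0].
- by move=> e; rewrite /gfun (tail_split hm) -natr1 e; ring.
- move=> hg.
  have elam : lam p q phi m = lam p q phi m.+1.
    move: hg ha; rewrite /gfun /lam (tail_split hm) -natr1 => hg ha.
    set T := tail_sum phi m.+1 in hT hg *; set f := phi_at phi m in hg *.
    have ef : f = q * T / (1 - (m%:R + 1) * q).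
      apply: (mulIf (negbT (gt_eqF ha))); rewrite mulfVK ?gt_eqF //; nra.
    rewrite ef; field; rewrite ?gt_eqF //.
  apply: functional_extensionality => i.
  case: (ltnP i m) => him; first by rewrite /theta him ltnS ltnW.
  case: (ltnP i m.+1) => him1; last first.
    by rewrite /theta ltnNge him /= ltnNge him1 /= elam.
  rewrite [RHS]/theta him1 (theta_val hK hq hpq hp simp sorted) //.
  have -> : i = Ordinal hm by apply: val_inj => /=; lia.
  rewrite -(phi_atE hm).
  have -> : phi_at phi m * (1 - m%:R * q) - q * tail_sum phi m = 0
    by rewrite -hg /gfun; ring.
  by rewrite mul0r.
Qed.
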